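(* If $R\subseteq\mathbb{N}$ has large gaps, then $R$ is rich.
   Context: A set $R\subseteq\mathbb{N}$ has large gaps if $R$ is infinite, $0\notin R$, and for every $k\in\mathbb{N}$ with $k>0$ there exists $q\in R$ such that $[\lfloor q/k\rfloor,\,k\cdot q]\cap R=\{q\}$ (intervals of natural numbers). A set $R\subseteq\mathbb{N}$ is rich if for all $s,u,v\in\mathbb{N}$, all $\bar a_0\in\{0,1\}^s\setminus\{\bar0\}$, $\bar a_1,\dots,\bar a_u\in\mathbb{N}^s$ and all $c_1,\dots,c_u\in\mathbb{N}$ with $(\bar a_0,0)\ne(\bar a_i,c_i)$ for all $i\in\{1,\dots,u\}$, there exist $\bar x,\bar y\in(v+\mathbb{N})^s$ (vectors with all entries $\ge v$) such that $\bar a_0^\top\bar x\in R\iff\bar a_0^\top\bar y\notin R$, and $\bar a_i^\top\bar x-c_i\in R\iff\bar a_i^\top\bar y-c_i\in R$ for all $i\in\{1,\dots,u\}$. *)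

(* Defs.v *)
From mathcomp Require Import all_boot.
Set Implicit Arguments. Unset Strict Implicit. Unset Printing Implicit Defensive.

Definition dotn (s : nat) (a x : 'I_s -> nat) : nat := \sum_(j < s) a j * x j.

(* The integer (a^T x - c) belongs to R (as an integer; negative integers are
   never in R ⊆ N). *)
Definition inR_shift (R : nat -> Prop) (n c : nat) : Prop := c <= n /\ R (n - c).

Definition large_gaps (R : nat -> Prop) : Prop :=
  (forall N, exists q, N <= q /\ R q)
  /\ ~ R 0
  /\ forall k : nat, 0 < k ->
       exists q, R q /\ forall n, q %/ k <= n -> n <= k * q -> R n -> n = q.

Definition rich (R : nat -> Prop) : Prop :=
  forall (s u v : nat) (a0 : 'I_s -> bool) (a : 'I_u -> 'I_s -> nat) (c : 'I_u -> nat),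
    (exists j, a0 j = true) ->
    (forall i, ~ ((forall j, a i j = nat_of_bool (a0 j)) /\ c i = 0)) ->
    exists x y : 'I_s -> nat,
      (forall j, v <= x j) /\ (forall j, v <= y j) /\
      (R (dotn (fun j => nat_of_bool (a0 j)) x) <-> ~ R (dotn (fun j => nat_of_bool (a0 j)) y)) /\
      (forall i, inR_shift R (dotn (a i) x) (c i) <-> inR_shift R (dotn (a i) y) (c i)).

(* Main.v *)
Require Import Defs.
From mathcomp Require Import all_boot.
From mathcomp Require Import zify.

Lemma divmod_uniq {P u w X Y} : u < P -> w < P -> u + P * X = w + P * Y -> u = w /\ X = Y.
Proof.
move=> hu hw E.
have P0 : 0 < P by lia.
have h1 := congr1 (fun n => n %% P) E.
have h2 := congr1 (fun n => n %/ P) E.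
rewrite /= !(addnC _ (P * _)) ![P * _]mulnC !modnMDl !modn_small // in h1.
rewrite /= !(addnC _ (P * _)) ![P * _]mulnC !divnMDl // !divn_small // !addn0 in h2.
by [].
Qed.

Lemma digits s P (d e : 'I_s -> nat) : (forall j, d j < P) -> (forall j, e j < P) ->
  \sum_(j < s) d j * P ^ j = \sum_(j < s) e j * P ^ j -> forall j, d j = e j.
Proof.
elim: s d e => [|s IH] d e hd he E j; first by case: j.
rewrite !big_ord_recl /= !expn0 !muln1 in E.
have F : forall f : 'I_s.+1 -> nat,
  \sum_(i < s) f (lift ord0 i) * P ^ (bump 0 i) = P * \sum_(i < s) f (lift ord0 i) * P ^ i.
  move=> f; rewrite big_distrr; apply: eq_bigr => i _.
  by rewrite /bump /= add1n expnS mulnCA.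
rewrite !F in E.
case: (divmod_uniq (hd ord0) (he ord0) E) => h0 hS.
have H := IH _ _ (fun i => hd (lift ord0 i)) (fun i => he (lift ord0 i)) hS.
by case: (unliftP ord0 j) => [j'|] ->.
Qed.

Lemma large_q R : large_gaps R -> forall k M, 0 < k -> exists q, M <= q /\ R q /\
  forall n, q %/ k <= n -> n <= k * q -> R n -> n = q.
Proof.
move=> [Inf [R0 Iso]] k M k0.
have [p [Mp Rp]] := Inf M.
have K0 : 0 < k * p.+1 by rewrite muln_gt0 k0.
have [q [Rq Hq]] := Iso _ K0.
have q0 : q != 0 by apply/eqP => E; apply: R0; rewrite -E.
case: (leqP M q) => Mq.
  exists q; split => //; split => // n h1 h2 Rn; apply: Hq => //.
    apply: leq_trans h1; apply: leq_div2l => //; apply: leq_pmulr => //.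
  apply: leq_trans h2 _; rewrite leq_mul2r leq_pmulr // orbT //.
exfalso.
have : p = q.
  apply: Hq => //.
    apply: leq_trans (leq_div _ _) _; lia.
  have : k * p.+1 <= k * p.+1 * q by rewrite leq_pmulr // lt0n.
  have : p.+1 <= k * p.+1 by rewrite leq_pmull.
  lia.
lia.
Qed.

Lemma dot_shift s (w b : 'I_s -> nat) j0 t :
  dotn w (fun j => b j + (if j == j0 then t else 0)) = dotn w b + w j0 * t.
Proof.
rewrite /dotn.
under eq_bigr do rewrite mulnDr.
rewrite big_split /=; congr (_ + _).
rewrite (bigD1 j0) //= eqxx big1 ?addn0 // => i /negbTE ->; by rewrite muln0.
Qed.

Lemma dot_base s (w : 'I_s -> nat) P :
  dotn w (fun j => P ^ (j.+1)) = P * \sum_(j < s) w j * P ^ j.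
Proof.
rewrite /dotn big_distrr; apply: eq_bigr => i _; by rewrite expnS mulnCA.
Qed.

Theorem proposition6p10 (R : nat -> Prop) : large_gaps R -> rich R.
Proof.
move=> LG s u v a0 a c [j0 Hj0] Hne.
pose A := \max_(i < u) \max_(j < s) a i j.
pose Cm := \max_(i < u) c i.
pose dl := Cm.+1.
have hdl : dl = Cm.+1 by [].
pose P := A + Cm + v + 2.
pose base := fun j : 'I_s => P ^ (j.+1).
pose Bs := \sum_(j < s) base j.
pose b0 := fun j => nat_of_bool (a0 j).
have hA : forall i j, a i j <= A.
  move=> i j; apply: leq_trans (leq_bigmax j) _.
  exact: (leq_bigmax (F := fun i => \max_(j < s) a i j) i).
have hC : forall i, c i <= Cm by move=> i; exact: (leq_bigmax (F := c) i).
have hbase : forall j, P <= base j.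
  move=> j; rewrite /base expnS; apply: leq_pmulr; rewrite expn_gt0; lia.
have hb0 : dotn b0 base <= Bs.
  apply: leq_sum => j _; rewrite /b0; case: (a0 j); lia.
have hai : forall i, dotn (a i) base <= A * Bs.
  move=> i; rewrite /dotn /Bs big_distrr; apply: leq_sum => j _.
  by rewrite leq_mul2r hA orbT.
have [q [Mq [Rq Iso]]] := @large_q R LG (3 * A + 2) (2 * Bs + 2 * dl + 1) (ltac:(lia)).
have hq2 : q %/ (3 * A + 2) <= q %/ 2 by apply: leq_div2l; lia.
pose Q := q - dotn b0 base.
have hQ : Q = q - dotn b0 base by [].
have b0j0 : b0 j0 = 1 by rewrite /b0 Hj0.
exists (fun j => base j + (if j == j0 then Q else 0)),
       (fun j => base j + (if j == j0 then Q + dl else 0)).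
split; first by move=> j; have := hbase j; lia.
split; first by move=> j; have := hbase j; lia.
split.
  rewrite !dot_shift Hj0 !mul1n -/base -/b0.
  have -> : dotn b0 base + Q = q by rewrite /Q; lia.
  have E : dotn b0 base + (Q + dl) = q + dl by rewrite /Q; lia.
  rewrite E; split => // _ Rqd.
  have := Iso (q + dl) ltac:(lia) ltac:(lia) Rqd; lia.
move=> i.
rewrite !dot_shift.
case W0 : (a i j0) => [|w'].
  by rewrite !mul0n.
have key : forall e, (e = 0 \/ e = dl) ->
    ~ inR_shift R (dotn (a i) base + w'.+1 * (Q + e)) (c i).
  move=> e he [hc hR].
  have hci := hC i.
  have haiB := hai i.
  have hw : w'.+1 <= A by rewrite -W0.
  have l1 : Q + e <= w'.+1 * (Q + e) by apply: leq_pmull.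
  have l2 : w'.+1 * (Q + e) <= A * (2 * q) by apply: leq_mul => //; lia.
  have l3 : A * Bs <= A * q by rewrite leq_mul2l; apply/orP; right; lia.
  have low : q %/ (3*A+2) <= dotn (a i) base + w'.+1 * (Q + e) - c i.
    move: hq2; generalize (q %/ (3*A+2)) => t ht; lia.
  have := Iso _ low ltac:(nia) hR => Eq.
  case: w' W0 hw l1 l2 Eq hc hR low => [|w''] W0 hw l1 l2 Eq hc hR low.
    rewrite mul1n in Eq.
    have E2 : e + P * \sum_(j < s) a i j * P ^ j = c i + P * \sum_(j < s) b0 j * P ^ j.
      rewrite -!dot_base -/base; rewrite /Q in Eq; lia.
    have eP : e < P by rewrite /P /dl in he *; lia.
    have cP : c i < P by rewrite /P; lia.
    case: (divmod_uniq eP cP E2) => ec hs.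
    case: he => he; last by rewrite /dl in he; lia.
    apply: (Hne i); split; last by lia.
    have Hd : forall j, a i j = b0 j.
      apply: (@digits s P (a i) b0 _ _ hs) => j1.
        by apply: leq_ltn_trans (hA i j1) _; rewrite /P; lia.
      by rewrite /b0; case: (a0 j1); rewrite /P; lia.
    move=> j; exact: Hd j.
  have l4 : 2 * (Q + e) <= w''.+2 * (Q + e) by rewrite leq_mul2r; apply/orP; right.
  rewrite /Q in l4 Eq; lia.
split => H; exfalso.
  by apply: (key 0 (or_introl erefl)); rewrite addn0.
by apply: (key dl (or_intror erefl)).
Qed.
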